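(* There exists $\epsilon>0$ such that, for all $\mu\in[-1,0.55]$, $d\theta(f_\mu)<-\epsilon$ on $K_\mu\setminus\Delta$.
   Context: The Sprott vector field $f_\mu$ on $\mathbb{R}^3$ is $\dot x=y^2-z-\mu x$, $\dot y=z^2-x-\mu y$, $\dot z=x^2-y-\mu z$. $\Delta:=\mathrm{span}\{(1,1,1)\}$; $\|\mathbf{x}_\perp\|^2=\tfrac23(x^2+y^2+z^2-xy-yz-zx)$; $d\theta:=\frac{1}{\sqrt3}\frac{(z-y)dx+(x-z)dy+(y-x)dz}{\|\mathbf{x}_\perp\|^2}$ on $\mathbb{R}^3\setminus\Delta$. $V(\mathbf{x}):=x+y+z$, $r_\mu:=\|\mathbf{x}-\frac{1+\mu}{2}(1,1,1)\|$, $c:=\frac{3^{3/4}+3^{1/4}}{2}$. For $\mu>-1$, $K_\mu:=\{\mathbf{x}\colon V(\mathbf{x})\ge r_\mu-c(1+\mu)\arctan(\frac{2r_\mu}{3^{1/4}(1+\mu)})-\frac{\sqrt3}{2}(1+\mu)+c(1+\mu)\arctan(3^{1/4})\}\cap V^{-1}[0,3(1+\mu)]$, and $K_{-1}:=\{\mathbf{0}\}$. *)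

(* Defs.v *)
From Stdlib Require Import Reals Lra.
Open Scope R_scope.

Definition sprott_x (mu x y z : R) : R := y^2 - z - mu * x.
Definition sprott_y (mu x y z : R) : R := z^2 - x - mu * y.
Definition sprott_z (mu x y z : R) : R := x^2 - y - mu * z.

Definition in_Delta (x y z : R) : Prop := x = y /\ y = z.

Definition perp_norm2 (x y z : R) : R :=
  (2/3) * (x^2 + y^2 + z^2 - x*y - y*z - z*x).

Definition dtheta (x y z vx vy vz : R) : R :=
  (1 / sqrt 3) * (((z - y) * vx + (x - z) * vy + (y - x) * vz) / perp_norm2 x y z).

Definition dtheta_f (mu x y z : R) : R :=
  dtheta x y z (sprott_x mu x y z) (sprott_y mu x y z) (sprott_z mu x y z).

Definition V (x y z : R) : R := x + y + z.

Definition r_mu (mu x y z : R) : R :=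
  let a := (1 + mu) / 2 in
  sqrt ((x - a)^2 + (y - a)^2 + (z - a)^2).

Definition c_const : R := (Rpower 3 (3/4) + Rpower 3 (1/4)) / 2.

Definition in_K (mu x y z : R) : Prop :=
  if Rle_dec mu (-1) then (* used only for mu = -1 *)
    x = 0 /\ y = 0 /\ z = 0
  else
    let r := r_mu mu x y z in
    V x y z >= r - c_const * (1 + mu) * atan (2 * r / (Rpower 3 (1/4) * (1 + mu)))
                 - (sqrt 3 / 2) * (1 + mu)
                 + c_const * (1 + mu) * atan (Rpower 3 (1/4))
    /\ 0 <= V x y z <= 3 * (1 + mu).

(* Main.v *)
Require Import Defs.
From Stdlib Require Import Reals Lra Psatz.
Open Scope R_scope.

Lemma atan_lb t : 0 <= t -> t - t^3/3 <= atan t.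
Proof.
  intros Ht. destruct (Req_dec t 0) as [->|Hn].
  - rewrite atan_0; lra.
  - destruct (MVT_cor2 (fun t => atan t - t + /3 * t^3) (fun c => /(1+c^2) - 1 + c^2) 0 t)
      as [c [Hc1 Hc2]]; [lra| |].
    + intros c _.
      replace (/(1+c^2) - 1 + c^2) with (/(1+c^2) - 1 + /3 * (INR 3 * c^(pred 3)))
        by (simpl; field; nra).
      apply derivable_pt_lim_plus; [apply derivable_pt_lim_minus|].
      * apply derivable_pt_lim_atan.
      * apply derivable_pt_lim_id.
      * apply (derivable_pt_lim_scal (fun t => t^3) (/3) c (INR 3 * c^(pred 3))).
        apply derivable_pt_lim_pow.
    + rewrite atan_0 in Hc1.
      assert (Hw : / (1 + c^2) * (1 + c^2) = 1) by (field; nra).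
      assert (Hp : 0 < / (1 + c^2)) by (apply Rinv_0_lt_compat; nra).
      assert (0 <= / (1 + c ^ 2) - 1 + c ^ 2) by nra.
      nra.
Qed.

Lemma atan_ub t : 0 <= t -> atan t <= t - t^3/3 + t^5/5.
Proof.
  intros Ht. destruct (Req_dec t 0) as [->|Hn].
  - rewrite atan_0; lra.
  - destruct (MVT_cor2 (fun t => t - /3 * t^3 + /5 * t^5 - atan t) (fun c => 1 - c^2 + c^4 - /(1+c^2)) 0 t)
      as [c [Hc1 Hc2]]; [lra| |].
    + intros c _.
      replace (1 - c^2 + c^4 - /(1+c^2)) with (1 - /3 * (INR 3 * c^(pred 3)) + /5 * (INR 5 * c^(pred 5)) - /(1+c^2))
        by (simpl; field; nra).
      apply derivable_pt_lim_minus; [apply derivable_pt_lim_plus; [apply derivable_pt_lim_minus|]|].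
      * apply derivable_pt_lim_id.
      * apply (derivable_pt_lim_scal (fun t => t^3) (/3) c (INR 3 * c^(pred 3))).
        apply derivable_pt_lim_pow.
      * apply (derivable_pt_lim_scal (fun t => t^5) (/5) c (INR 5 * c^(pred 5))).
        apply derivable_pt_lim_pow.
      * apply derivable_pt_lim_atan.
    + rewrite atan_0 in Hc1.
      assert (Hw : / (1 + c^2) * (1 + c^2) = 1) by (field; nra).
      assert (Hp : 0 < / (1 + c^2)) by (apply Rinv_0_lt_compat; nra).
      assert (0 <= 1 - c^2 + c^4 - / (1 + c ^ 2)).
      { assert (c^6 >= 0) by nra.
        assert ((1 - c^2 + c^4) * (1+c^2) = 1 + c^6) by ring. nra. }
      nra.
Qed.
Lemma final_num (a r s k ik u t1: R): 0<a<=155/100 -> 2<r -> 1732/1000<k<17321/10000 -> ik*k=1 -> u*r = a -> t1*r = a*a ->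
  s >= r + (3+k)/4*t1 - (3*k+3)/48*t1*u*u - a*((k+1)/2 - (k+1)/6*ik + (k+1)/30) - k/2*a ->
  s + 148/100 > 7072/10000*r.
Proof.
  intros Ha Hr Hk Hik Hu Ht Hs.
  assert (Hu1 : 0 <= u <= 775/1000) by (split; nra).
  assert (Ht1 : 0 <= t1) by nra.
  assert (Hik1 : 1/(17321/10000) < ik < 1/(1732/1000)) by (split; nra).
  assert (H1 : (3*k+3)/48*t1*u*u <= 1708/10000 * 600625/1000000 * t1).
  { assert (u*u <= 600625/1000000) by nra.
    assert ((3*k+3)/48 <= 1708/10000) by lra. 
    assert (0 <= (3*k+3)/48) by lra.
    assert (Hq : (3*k+3)/48*(u*u) <= 1708/10000 * (600625/1000000)) by (apply Rmult_le_compat; nra).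
    replace ((3*k+3)/48*t1*u*u) with (((3*k+3)/48*(u*u))*t1) by ring.
    apply Rmult_le_compat_r; lra. }
  assert (H2 : (k+1)/2 - (k+1)/6*ik + (k+1)/30 + k/2 <= 20605/10000).
  { assert (E : (k+1)/6*ik = (ik*k + ik)/6) by (unfold Rdiv; ring). rewrite E, Hik. unfold Rdiv in Hik1 |- *. lra. }
  assert (H5 : (3+k)/4*t1 >= 1183/1000*t1) by nra.
  assert (H6 : a*((k+1)/2 - (k+1)/6*ik + (k+1)/30) + k/2*a <= 20605/10000*a).
  { replace (a*((k+1)/2 - (k+1)/6*ik + (k+1)/30) + k/2*a) with (a*((k+1)/2 - (k+1)/6*ik + (k+1)/30 + k/2)) by ring.
    rewrite (Rmult_comm (20605/10000)). apply Rmult_le_compat_l; lra. }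
  assert (H3 : s >= r + 10804/10000*t1 - 20605/10000*a).
  { set (A1 := (3 * k + 3) / 48 * t1 * u * u) in *. set (A2 := (3 + k) / 4 * t1) in *.
    set (A3 := a * ((k + 1) / 2 - (k + 1) / 6 * ik + (k + 1) / 30)) in *. lra. }
  assert (H4 : 0 <= (r - 192/100*a)^2) by apply pow2_ge_0.
  assert (H7 : 0 < r * (2928/10000*r + 10804/10000*t1 - 20605/10000*a + 148/100)).
  { assert (EQ : (r * (2928/10000*r + 10804/10000*t1 - 20605/10000*a + 148/100)) = (2928/10000*(r - 192/100*a)^2 + (10804/10000 - 2928/10000*(192/100)^2)*(a*a) + r*(148/100 - (20605/10000 - 2*2928/10000*192/100)*a)) + 10804/10000*(t1*r - a*a)) by (unfold Rdiv; ring).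
    rewrite Ht, Rminus_diag, Rmult_0_r, Rplus_0_r in EQ. rewrite EQ.
    assert (0 < r*(148/100 - (20605/10000 - 2*2928/10000*192/100)*a)) by (apply Rmult_lt_0_compat; lra).
    assert (0 <= a*a) by nra. nra. }
  assert (H8 : 0 < 2928/10000*r + 10804/10000*t1 - 20605/10000*a + 148/100).
  { destruct (Rle_or_lt (2928/10000*r + 10804/10000*t1 - 20605/10000*a + 148/100) 0); [|lra].
    assert (r * (2928/10000*r + 10804/10000*t1 - 20605/10000*a + 148/100) <= 0) by (rewrite <- (Rmult_0_r r); apply Rmult_le_compat_l; lra). lra. }
  lra.
Qed.

Lemma consts : exists q k, 0 < q /\ Rpower 3 (1/4) = q /\ Rpower 3 (3/4) = q*q*q /\ q*q = k /\ sqrt 3 = k /\ k*k = 3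
  /\ 1732/1000 < k < 17321/10000.
Proof.
  exists (Rpower 3 (1/4)), (sqrt 3).
  assert (Hq : 0 < Rpower 3 (1/4)) by (unfold Rpower; apply exp_pos).
  assert (Hqq : Rpower 3 (1/4) * Rpower 3 (1/4) = sqrt 3).
  { rewrite <- Rpower_plus. rewrite <- Rpower_sqrt by lra. f_equal. field. }
  assert (Hk : sqrt 3 * sqrt 3 = 3) by (apply sqrt_sqrt; lra).
  assert (Hk0 : 0 <= sqrt 3) by apply sqrt_pos.
  repeat split; auto.
  - replace (3/4) with (1/4 + 1/4 + 1/4) by field. rewrite !Rpower_plus. ring.
  - nra.
  - nra.
Qed.

Lemma Kbound (a r s : R) : 0 < a <= 155/100 -> 0 <= r -> 0 <= s ->
  s >= r - c_const * a * atan (2 * r / (Rpower 3 (1/4) * a))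
                 - (sqrt 3 / 2) * a
                 + c_const * a * atan (Rpower 3 (1/4)) ->
  s + 148/100 > 7072/10000 * r.
Proof.
  intros Ha Hr Hs HK.
  destruct (Rle_or_lt r 2) as [Hr2|Hr2]; [lra|].
  destruct consts as [q [k [Hq [Eq1 [Eq3 [Hqk [Hsk [Hkk Hkb]]]]]]]].
  unfold c_const in HK. rewrite Eq1, Eq3, Hsk in HK.
  set (X := 2 * r / (q * a)) in HK.
  assert (HX : 0 < X) by (unfold X; apply Rdiv_lt_0_compat; nra).
  assert (E1 : atan X = PI/2 - atan (/X)) by (rewrite atan_inv; lra).
  assert (E2 : atan q = PI/2 - atan (/q)) by (rewrite atan_inv; lra).
  rewrite E1, E2 in HK.
  set (w := /X) in HK. set (tq := /q) in HK.
  assert (Hw : 0 <= w) by (unfold w; left; apply Rinv_0_lt_compat; lra).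
  assert (Htq : 0 <= tq) by (unfold tq; left; apply Rinv_0_lt_compat; lra).
  pose proof (atan_lb w Hw) as Lw. pose proof (atan_ub tq Htq) as Ut.
  set (cc := (q*q*q + q)/2) in HK.
  assert (Hcc : 0 <= cc * a) by (unfold cc; apply Rmult_le_pos; nra).
  assert (HK2 : s >= r + cc*a*(w - w^3/3) - cc*a*(tq - tq^3/3 + tq^5/5) - k/2*a).
  { assert (cc*a*(w - w^3/3) <= cc*a*atan w) by (apply Rmult_le_compat_l; lra).
    assert (cc*a*atan tq <= cc*a*(tq - tq^3/3 + tq^5/5)) by (apply Rmult_le_compat_l; lra).
    replace (r - cc * a * (PI / 2 - atan w) - k / 2 * a + cc * a * (PI / 2 - atan tq))
      with (r + cc*a*atan w - cc*a*atan tq - k/2*a) in HK by ring.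
    lra. }
  assert (Hq4 : q*q*q*q = 3) by (replace (q*q*q*q) with ((q*q)*(q*q)) by ring; rewrite Hqk; lra).
  assert (Hk0 : k <> 0) by lra.
  set (u := a/r). set (t1 := a*a/r).
  assert (EA : cc*a*(w - w^3/3) = (3+k)/4*t1 - (3*k+3)/48*t1*u*u).
  { transitivity ((q*q*q*q + q*q)/4*t1 - (q*q*q*q*(q*q) + q*q*q*q)/48*t1*u*u).
    - unfold cc, w, X, t1, u. field. lra.
    - rewrite Hq4, Hqk. reflexivity. }
  assert (EB : cc*a*(tq - tq^3/3 + tq^5/5) = a*((k+1)/2 - (k+1)/6*(/k) + (k+1)/30)).
  { transitivity (a*((q*q+1)/2 - (q*q+1)/6*(/(q*q)) + (q*q+1)/(10*(q*q*q*q)))).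
    - unfold cc, tq. field. lra.
    - rewrite Hq4, Hqk. field. lra. }
  rewrite EA, EB in HK2.
  apply (final_num a r s k (/k) u t1); try lra.
  - field. lra.
  - unfold u. field. lra.
  - unfold t1. field. lra.
Qed.
Lemma geom (x y z s T : R) : s = x+y+z ->
  let P := perp_norm2 x y z in
  let N := (z - y) * (y^2 - z) + (x - z) * (z^2 - x) + (y - x) * (x^2 - y) in
  0 < P -> 0 < T -> 2*T^2 > P -> N + (3/2 + s - T) * P < 0.
Proof.
  intros Hs P N HP HT H2.
  set (C := 9/2*((x-s/3)*(y-s/3)*(z-s/3)) + 1/2*((x-y)*(y-z)*(z-x))).
  assert (EN : N = -(3/2+s)*P - C) by (unfold N, P, C, perp_norm2; rewrite Hs; field).
  assert (EC : C^2 + 3/4*(3*((x-s/3)*(y-s/3)*(z-s/3)) - (x-y)*(y-z)*(z-x))^2 = P^3/2)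
    by (unfold P, C, perp_norm2; rewrite Hs; field).
  assert (HC : C^2 <= P^3/2) by (assert (0 <= 3/4*(3*((x-s/3)*(y-s/3)*(z-s/3)) - (x-y)*(y-z)*(z-x))^2) by (apply Rmult_le_pos; [lra|apply pow2_ge_0]); lra).
  assert (HTP : (T*P)^2 > P^3/2).
  { replace ((T*P)^2) with (T^2*P^2) by ring. replace (P^3/2) with ((P/2)*P^2) by (unfold Rdiv; ring).
    apply Rmult_gt_compat_r; [nra|lra]. }
  assert (0 < T*P + C).
  { destruct (Rle_or_lt (T*P + C) 0); [|lra].
    assert (0 < T*P) by nra. nra. }
  rewrite EN. nra.
Qed.

Theorem theorem6 :
  exists eps : R, 0 < eps /\
    forall mu : R, -1 <= mu <= 55 / 100 ->
    forall x y z : R, in_K mu x y z -> ~ in_Delta x y z ->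
      dtheta_f mu x y z < - eps.
Proof.
  exists (1/100). split; [lra|].
  intros mu Hmu x y z HK HD.
  unfold in_K in HK. destruct (Rle_dec mu (-1)) as [Hm|Hm].
  { destruct HK as [-> [-> ->]]. exfalso. apply HD. split; reflexivity. }
  destruct HK as [HL [HV0 HV1]].
  set (r := r_mu mu x y z) in *.
  set (s := V x y z) in *.
  assert (Hr0 : 0 <= r) by (unfold r, r_mu; apply sqrt_pos).
  assert (HKb := Kbound (1+mu) r s ltac:(lra) Hr0 HV0 HL).
  assert (Hr2 : r^2 = (x - (1+mu)/2)^2 + (y - (1+mu)/2)^2 + (z - (1+mu)/2)^2).
  { unfold r, r_mu. cbv zeta. apply pow2_sqrt.
    assert (0 <= (x - (1+mu)/2)^2) by apply pow2_ge_0.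
    assert (0 <= (y - (1+mu)/2)^2) by apply pow2_ge_0.
    assert (0 <= (z - (1+mu)/2)^2) by apply pow2_ge_0. lra. }
  assert (HPr : perp_norm2 x y z <= r^2).
  { rewrite Hr2. unfold perp_norm2.
    assert (E : (x - (1+mu)/2)^2 + (y - (1+mu)/2)^2 + (z - (1+mu)/2)^2 - 2/3*(x^2+y^2+z^2-x*y-y*z-z*x)
       = (x+y+z - 3*((1+mu)/2))^2/3) by field.
    assert (0 <= (x+y+z - 3*((1+mu)/2))^2/3) by (apply Rmult_le_pos; [apply pow2_ge_0| lra]). lra. }
  assert (HP : 0 < perp_norm2 x y z).
  { unfold perp_norm2. destruct (Rle_or_lt (x^2+y^2+z^2-x*y-y*z-z*x) 0) as [H|H]; [|lra].
    exfalso. apply HD.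
    assert (x^2+y^2+z^2-x*y-y*z-z*x = ((x-y)^2 + (y-z)^2 + (z-x)^2)/2) by field.
    assert (0 <= (x-y)^2) by apply pow2_ge_0. assert (0 <= (y-z)^2) by apply pow2_ge_0.
    assert (0 <= (z-x)^2) by apply pow2_ge_0.
    assert ((x-y)^2 = 0) by lra. assert ((y-z)^2 = 0) by lra.
    split; nra. }
  assert (Hs3 : 1732/1000 < sqrt 3 < 17321/10000).
  { assert (sqrt 3 * sqrt 3 = 3) by (apply sqrt_sqrt; lra). pose proof (sqrt_pos 3). split; nra. }
  set (T := s + 3/2 - sqrt 3/100).
  assert (HT : T > 7072/10000 * r) by (unfold T; lra).
  assert (HT2 : 2*T^2 > perp_norm2 x y z) by nra.
  assert (HG := geom x y z s T eq_refl HP ltac:(nra) HT2).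
  cbv zeta in HG.
  replace (3/2 + s - T) with (sqrt 3/100) in HG by (unfold T; ring).
  unfold dtheta_f, dtheta, sprott_x, sprott_y, sprott_z.
  set (P := perp_norm2 x y z) in *.
  set (N := (z - y) * (y^2 - z) + (x - z) * (z^2 - x) + (y - x) * (x^2 - y)) in *.
  replace ((z - y) * (y ^ 2 - z - mu * x) + (x - z) * (z ^ 2 - x - mu * y) + (y - x) * (x ^ 2 - y - mu * z)) with N
    by (unfold N; ring).
  assert (Hs0 : 0 < sqrt 3) by lra.
  replace (1 / sqrt 3 * (N / P)) with (N / (sqrt 3 * P)) by (field; lra).
  apply (Rmult_lt_reg_r (sqrt 3 * P)); [nra|].
  replace (N / (sqrt 3 * P) * (sqrt 3 * P)) with N by (field; lra).
  replace (- (1/100) * (sqrt 3 * P)) with (- (sqrt 3/100 * P)) by (unfold Rdiv; ring).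
  lra.
Qed.
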